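(* Let $m=2h+1\geq 3$ be odd and let $f_1(x)=x+x^{2^{h+1}-1}+x^{2^m-2^{h+1}+1}\in\mathbb{F}_{2^m}[x]$. Let $s^\infty$ be the sequence $s_t=\operatorname{Tr}(f_1(\alpha^t+1))$, $t\ge 0$. Then the binary cyclic code $\mathcal{C}_s$ has parameters $[2^m-1,\,2^m-2-m,\,4]$ and generator polynomial $g_s(x)=(x-1)\,m_{\alpha^{-1}}(x)$.
   Context: Let $m\ge 1$, $v=2^m-1$, $\alpha$ a primitive element of $\mathbb{F}_{2^m}$, and $\operatorname{Tr}(x)=\sum_{i=0}^{m-1}x^{2^i}$ the absolute trace from $\mathbb{F}_{2^m}$ to $\mathbb{F}_2$. For a polynomial $F$ over $\mathbb{F}_{2^m}$ the binary sequence $s^\infty=(s_t)_{t\ge0}$ is defined by $s_t=\operatorname{Tr}(F(\alpha^t+1))$; it is periodic with period dividing $v$. Its minimal polynomial $g_s(x)$ is the polynomial $1+c_1x+\dots+c_Lx^L\in\mathbb{F}_2[x]$ of least degree $L$ such that $s_i+c_1s_{i-1}+\dots+c_Ls_{i-L}=0$ for all $i\ge L$; its degree $L_s$ is the linear span of $s^\infty$. $\mathcal{C}_s$ denotes the binary cyclic code of length $v$ with generator polynomial $g_s(x)$ (so $\dim\mathcal{C}_s=v-L_s$). For an integer $i$, $m_{\alpha^i}(x)$ is the minimal polynomial of $\alpha^i$ over $\mathbb{F}_2$. $[n,k,d]$ denotes length, dimension, minimum Hamming distance. *)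

(* Defs.v *)
From HB Require Import structures.
From mathcomp Require Import all_boot all_order all_algebra all_field.
Set Implicit Arguments. Unset Strict Implicit. Unset Printing Implicit Defensive.
Import GRing.Theory.
Local Open Scope ring_scope.

Definition trace_abs (F : finFieldType) (m : nat) (x : F) : F :=
  \sum_(i < m) x ^+ (2 ^ i).

Definition F2_to (F : finFieldType) (b : 'F_2) : F := (nat_of_ord b)%:R.

(* The binary sequence s_t = Tr(P(alpha^t + 1)), as an element of F_2
   (the trace takes values in {0,1}). *)
Definition trace_seq (F : finFieldType) (m : nat) (P : F -> F) (alpha : F)
  (t : nat) : 'F_2 :=
  if trace_abs m (P (alpha ^+ t + 1)) == 0 then 0 else 1.

Definition annihilates (s : nat -> 'F_2) (g : {poly 'F_2}) : Prop :=
  forall i : nat, ((size g).-1 <= i)%N ->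
    \sum_(j < size g) g`_j * s (i - j)%N = 0.

Definition is_seq_minpoly (s : nat -> 'F_2) (g : {poly 'F_2}) : Prop :=
  [/\ g`_0 = 1, annihilates s g &
      forall h : {poly 'F_2}, h`_0 = 1 -> annihilates s h -> (size g <= size h)%N].

Definition is_minpoly_F2 (F : finFieldType) (beta : F) (p : {poly 'F_2}) : Prop :=
  [/\ p \is monic, root (map_poly (@F2_to F) p) beta &
      forall q : {poly 'F_2}, q != 0 -> root (map_poly (@F2_to F) q) beta ->
        (size p <= size q)%N].

(* The binary cyclic code of length n generated by g: the ideal generated
   by g in F_2[x]/(x^n - 1), words identified with row vectors of length n. *)
Definition cyclic_code (n : nat) (g : {poly 'F_2}) : {set 'rV['F_2]_n} :=
  [set poly_rV ((rVpoly q * g) %% ('X^n - 1)) | q : 'rV['F_2]_n].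

Definition hweight (n : nat) (c : 'rV['F_2]_n) : nat :=
  #|[set i : 'I_n | c 0 i != 0]|.

Definition has_params (n : nat) (C : {set 'rV['F_2]_n}) (k d : nat) : Prop :=
  [/\ #|C| = (2 ^ k)%N,
      exists2 c, c \in C & (c != 0) && (hweight c == d) &
      forall c, c \in C -> c != 0 -> (d <= hweight c)%N].

(* Main.v *)
Require Import Defs.
From HB Require Import structures.
From mathcomp Require Import all_boot all_order all_algebra all_field.
From mathcomp Require Import zify ring.
Set Implicit Arguments. Unset Strict Implicit. Unset Printing Implicit Defensive.
Import GRing.Theory.
Local Open Scope ring_scope.

Section Tr.
Variable F : finFieldType.
Variable m : nat.
Hypothesis hF : #|F| = (2 ^ m)%N.

Lemma chF : 2 \in [pchar F].
Proof. exact: (card_finPcharP hF). Qed.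

Lemma two0 : 2%:R = 0 :> F. Proof. exact: pcharf0 chF. Qed.

Lemma addxx (x : F) : x + x = 0.
Proof. by rewrite -mulr2n -mulr_natr two0 mulr0. Qed.

Lemma sqrD (x y : F) : (x + y) ^+ 2 = x ^+ 2 + y ^+ 2.
Proof. by rewrite sqrrD -mulr_natr two0 mulr0 addr0. Qed.

Lemma frobD k (x y : F) : (x + y) ^+ (2 ^ k) = x ^+ (2 ^ k) + y ^+ (2 ^ k).
Proof.
elim: k => [|k IH]; first by rewrite !expr1.
by rewrite expnSr !exprM IH sqrD.
Qed.

Lemma sqr_sum (I : Type) (r : seq I) (a : I -> F) :
  (\sum_(i <- r) a i) ^+ 2 = \sum_(i <- r) a i ^+ 2.
Proof.
elim: r => [|i r IH]; first by rewrite !big_nil expr0n.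
by rewrite !big_cons sqrD IH.
Qed.

Lemma xq (x : F) : x ^+ (2 ^ m) = x.
Proof. by rewrite -hF expf_card. Qed.

Local Notation Tr := (trace_abs m).

Lemma TrD (x y : F) : Tr (x + y) = Tr x + Tr y.
Proof. by rewrite /trace_abs -big_split; apply: eq_bigr => i _; rewrite frobD. Qed.

Hypothesis m0 : (0 < m)%N.

Lemma Tr_sqr (x : F) : Tr (x ^+ 2) = Tr x.
Proof.
rewrite /trace_abs; case: m m0 xq => // m' _ xq'.
rewrite big_ord_recr big_ord_recl /= -exprM -expnS xq' expr1 addrC; congr (_ + _).
by apply: eq_bigr => i _; rewrite -exprM -expnS.
Qed.

Lemma Tr_pow2 k (x : F) : Tr (x ^+ (2 ^ k)) = Tr x.
Proof.
elim: k => [|k IH]; first by rewrite expr1.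
by rewrite expnSr exprM Tr_sqr IH.
Qed.

Lemma Tr_idem (x : F) : Tr x ^+ 2 = Tr x.
Proof.
rewrite -{2}(Tr_sqr x) /trace_abs sqr_sum; apply: eq_bigr => i _.
by rewrite -!exprM mulnC.
Qed.

Lemma Tr01 (x : F) : Tr x = 0 \/ Tr x = 1.
Proof.
have : Tr x * (Tr x - 1) = 0 by rewrite mulrBr mulr1 -expr2 Tr_idem subrr.
move/eqP; rewrite mulf_eq0 subr_eq0 => /orP[]/eqP; by [left|right].
Qed.

Lemma F2_trace_seq P (a : F) t : F2_to F (trace_seq m P a t) = Tr (P (a ^+ t + 1)).
Proof.
rewrite /trace_seq; case: eqP => [->|]; first by rewrite /F2_to.
by case: (Tr01 (P (a ^+ t + 1))) => // -> _; rewrite /F2_to.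
Qed.

Lemma Tr1 h : m = (2 * h + 1)%N -> Tr (1 : F) = 1.
Proof.
move=> hm; rewrite /trace_abs (eq_bigr (fun _ => 1)) => [|i _]; last by rewrite expr1n.
rewrite sumr_const card_ord hm natrD natrM two0 mul0r add0r.
by [].
Qed.

Lemma exp_cancel h (y : F) : m = (2 * h + 1)%N ->
  (y ^+ (2 ^ m - 2 ^ h.+1 + 1)) ^+ (2 ^ h) = y ^+ (2 ^ h.+1 - 1).
Proof.
move=> hm; rewrite -exprM.
have [->|y0] := eqVneq y 0.
  rewrite !expr0n; suff -> : (2 ^ h.+1 - 1 == 0)%N = false.
    by rewrite muln_eq0 expn_eq0 /= orbF; case: eqP => //; rewrite hm; lia.
  by rewrite expnS; have := expn_gt0 2 h; lia.
apply: (mulIf (expf_neq0 (2 ^ m) y0)).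
rewrite -!exprD.
have E1 : ((2 ^ m - 2 ^ h.+1 + 1) * 2 ^ h + 2 ^ m = 2 ^ m * 2 ^ h + 2 ^ h)%N.
  have Em : (2 ^ m = 2 * (2 ^ h * 2 ^ h))%N by rewrite hm addn1 expnS -expnD addnn -mul2n.
  rewrite Em expnS.
  have := expn_gt0 2 h; set a := (2 ^ h)%N; nia.
rewrite E1 exprD exprM xq exprD xq -exprSr subn1 prednK ?expn_gt0 // -exprD expnS mul2n addnn //.
Qed.

Lemma F2_add (a b : 'F_2) : F2_to F (a + b) = F2_to F a + F2_to F b.
Proof.
rewrite /F2_to.
case: a => [[|[|a]] Ha] //; case: b => [[|[|b]] Hb] //=; rewrite ?add0r ?addr0 //.
by rewrite -natrD two0.
Qed.

Lemma F2_mul (a b : 'F_2) : F2_to F (a * b) = F2_to F a * F2_to F b.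
Proof.
rewrite /F2_to.
case: a => [[|[|a]] Ha] //; case: b => [[|[|b]] Hb] //=; rewrite ?mul0r ?mulr0 ?mulr1 //.
Qed.

Definition F2r : {rmorphism 'F_2 -> F} :=
  HB.pack (@F2_to F) (GRing.isNmodMorphism.Build _ _ (@F2_to F) (erefl _, F2_add))
   (GRing.isMonoidMorphism.Build _ _ (@F2_to F) (erefl _, F2_mul)).

Lemma F2_idem (a : 'F_2) : F2r a ^+ 2 = F2r a.
Proof. by case: a => [[|[|a]] Ha] //=; rewrite /F2_to /= ?expr0n ?expr1n. Qed.

Lemma F2_inj (a : 'F_2) : F2r a = 0 -> a = 0.
Proof.
case: a => [[|[|a]] Ha] //= /eqP; rewrite /F2_to /=.
  by move=> _; apply: val_inj.
by rewrite oner_eq0.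
Qed.

Lemma map_sqr (p : {poly 'F_2}) (x : F) :
  ((map_poly F2r p).[x]) ^+ 2 = (map_poly F2r p).[x ^+ 2].
Proof.
rewrite !horner_coef sqr_sum; apply: eq_bigr => i _.
rewrite exprMn coef_map. rewrite F2_idem. by rewrite exprAC.
Qed.

Lemma map_frob k (p : {poly 'F_2}) (x : F) :
  ((map_poly F2r p).[x]) ^+ (2 ^ k) = (map_poly F2r p).[x ^+ (2 ^ k)].
Proof.
elim: k => [|k IH]; first by rewrite !expr1.
by rewrite expnSr !exprM IH map_sqr.
Qed.

Lemma horner_mapF2 (p : {poly 'F_2}) (x : F) N : (size p <= N)%N ->
  (map_poly F2r p).[x] = \sum_(i < N) F2r p`_i * x ^+ i.
Proof.
move=> hN; rewrite (@horner_coef_wide _ N); last by rewrite size_map_poly.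
by apply: eq_bigr => i _; rewrite coef_map.
Qed.

Variable h : nat.
Hypothesis hm : m = (2 * h + 1)%N.
Hypothesis h3 : (3 <= m)%N.
Variable alpha : F.
Hypothesis halpha : (2 ^ m - 1)%N.-primitive_root alpha.

Definition f1F (x : F) := x + x ^+ (2 ^ h.+1 - 1) + x ^+ (2 ^ m - 2 ^ h.+1 + 1).

Lemma Tr_f1 y : Tr (f1F y) = Tr y.
Proof.
rewrite /f1F !TrD -(Tr_pow2 h (y ^+ (2 ^ m - 2 ^ h.+1 + 1))) (exp_cancel y hm).
by rewrite -addrA addxx addr0.
Qed.

Definition sq := trace_seq m f1F alpha.

Definition gam (r : 'I_m.+1) : F := if val r is k.+1 then alpha ^+ (2 ^ k) else 1.

Lemma seq_val t : F2r (sq t) = \sum_(r < m.+1) gam r ^+ t.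
Proof.
rewrite [LHS]F2_trace_seq Tr_f1 TrD (Tr1 hm) big_ord_recl /= expr1n addrC.
congr (_ + _); apply: eq_bigr => i _; rewrite /gam /=.
by rewrite exprAC.
Qed.

Lemma n_gt0 : (0 < 2 ^ m - 1)%N.
Proof. have : (2 ^ 3 <= 2 ^ m)%N by rewrite leq_exp2l. lia. Qed.

Lemma alpha_neq0 : alpha != 0.
Proof.
apply/negP => /eqP a0; have := prim_expr_order halpha.
by rewrite a0 expr0n; case: eqP n_gt0 => [->|] //= _ _ /eqP; rewrite eq_sym oner_eq0.
Qed.

Lemma gam_neq0 r : gam r != 0.
Proof. by rewrite /gam; case: (val r) => [|k]; rewrite ?oner_neq0 ?expf_neq0 ?alpha_neq0. Qed.

Lemma ann_val (p : {poly 'F_2}) i : ((size p).-1 <= i)%N ->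
  F2r (\sum_(j < size p) p`_j * sq (i - j)) =
  \sum_(r < m.+1) gam r ^+ i * (map_poly F2r p).[(gam r)^-1].
Proof.
move=> hi; rewrite rmorph_sum.
under eq_bigr => j _ do rewrite rmorphM seq_val mulr_sumr.
rewrite exchange_big /=; apply: eq_bigr => r _.
rewrite (horner_mapF2 _ (leqnn _)) mulr_sumr; apply: eq_bigr => j _.
have hj : (j <= i)%N.
  have := ltn_ord j; move: (nat_of_ord j) => a ha.
  by move: hi; case: (size p) ha => // b; lia.
rewrite exprB // ?unitfE ?gam_neq0 // exprVn.
by rewrite mulrCA mulrA.
Qed.

Local Notation n := (2 ^ m - 1)%N.

Lemma pow_lt k : (k < m)%N -> (2 ^ k < n)%N.
Proof.
move=> km.
have E : (2 ^ m = 2 ^ k * 2 ^ (m - k))%N by rewrite -expnD subnKC // ltnW.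
have : (2 ^ 1 <= 2 ^ (m - k))%N by rewrite leq_exp2l //; lia.
have : (2 ^ 3 <= 2 ^ m)%N by rewrite leq_exp2l.
have := expn_gt0 2 k; rewrite E expn1 /=.
case: k km E => [|k] km E; first by rewrite expn0 mul1n; lia.
have : (2 ^ 1 <= 2 ^ k.+1)%N by rewrite leq_exp2l.
rewrite expn1; nia.
Qed.

Definition ge (r : 'I_m.+1) : nat := if val r is k.+1 then (2 ^ k)%N else 0%N.

Lemma gamE r : gam r = alpha ^+ ge r.
Proof. by rewrite /gam /ge; case: (val r). Qed.

Lemma ge_lt r : (ge r < n)%N.
Proof. rewrite /ge; case: r => [[|k] /= hk]; [exact: n_gt0 | exact: pow_lt]. Qed.

Lemma gam_inj : injective gam.
Proof.
move=> a b; rewrite !gamE => /eqP; rewrite (eq_prim_root_expr halpha).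
rewrite !modn_small ?ge_lt // => /eqP; rewrite /ge.
case: a b => [[|a] ha] [[|b] hb] //= E; apply: val_inj => //=.
- by have := expn_gt0 2 b; rewrite -E.
- by have := expn_gt0 2 a; rewrite E.
- by rewrite (expnI _ E).
Qed.

Lemma ann_roots p : annihilates sq p ->
  forall r, (map_poly F2r p).[(gam r)^-1] = 0.
Proof.
move=> hp; set L := (size p).-1; set c := fun r => (map_poly F2r p).[(gam r)^-1].
have H t : \sum_(r < m.+1) gam r ^+ (L + t) * c r = 0.
  by rewrite -ann_val ?leq_addr // hp ?leq_addr // rmorph0.
have HQ (Q : {poly F}) : \sum_(r < m.+1) Q.[gam r] * (gam r ^+ L * c r) = 0.
  under eq_bigr do rewrite horner_coef mulr_suml.
  rewrite exchange_big big1 // => t _.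
  rewrite (eq_bigr (fun r => Q`_t * (gam r ^+ (L + t) * c r))) => [|r _].
    by rewrite -mulr_sumr H mulr0.
  by rewrite exprD; ring.
move=> r0; pose Q := \prod_(r < m.+1 | r != r0) ('X - (gam r)%:P).
have := HQ Q; rewrite (bigD1 r0) //= big1 ?addr0; last first.
  move=> r /negPf rr0; rewrite /Q horner_prod (bigD1 r) /=; last by rewrite rr0.
  by rewrite !hornerE subrr /= !mul0r.
move/eqP; rewrite !mulf_eq0 expf_eq0 (negPf (gam_neq0 r0)) andbF.
case/or3P => [|//|/eqP //].
rewrite /Q horner_prod => E; exfalso; move: E; apply/negP/prodf_neq0 => r rr0.
by rewrite !hornerE subr_eq0; apply/eqP => /gam_inj E; move: rr0; rewrite E eqxx.
Qed.

Lemma ann_size p : annihilates sq p -> p`_0 = 1 -> (m.+2 <= size p)%N.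
Proof.
move=> hp p0.
pose rs := [seq (gam r)^-1 | r <- enum 'I_m.+1].
have := @max_poly_roots _ (map_poly F2r p) rs.
rewrite size_map_poly size_map size_enum_ord; apply.
- apply/eqP => E; have := congr1 (fun q : {poly F} => q`_0) E.
  by rewrite coef_map p0 coef0 /= /F2_to /= => /eqP; rewrite oner_eq0.
- by apply/allP => x /mapP [r _ ->]; apply/eqP; apply: ann_roots.
- rewrite map_inj_uniq ?enum_uniq // => a b /invr_inj; exact: gam_inj.
Qed.

Local Notation beta := (alpha^-1).
Variable mp : {poly 'F_2}.
Hypothesis hmp : is_minpoly_F2 alpha^-1 mp.

Lemma mapM_horner (p q : {poly 'F_2}) x :
  (map_poly F2r (p * q)).[x] = (map_poly F2r p).[x] * (map_poly F2r q).[x].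
Proof. by rewrite rmorphM hornerM. Qed.

Lemma mapXsubC_horner (a : 'F_2) x : (map_poly F2r ('X - a%:P)).[x] = x - F2r a.
Proof. by rewrite map_polyXsubC hornerXsubC. Qed.

Lemma mp_monic : mp \is monic. Proof. by case: hmp. Qed.
Lemma mp_neq0 : mp != 0. Proof. exact: monic_neq0 mp_monic. Qed.
Lemma mp_root : (map_poly F2r mp).[beta] = 0.
Proof. by case: hmp => _ /eqP. Qed.
Lemma mp_min q : q != 0 -> (map_poly F2r q).[beta] = 0 -> (size mp <= size q)%N.
Proof. by case: hmp => _ _ H qn0 qr; apply: H => //; apply/eqP. Qed.

Lemma mp_dvd p : (map_poly F2r p).[beta] = 0 -> mp %| p.
Proof.
move=> pr; apply/negPn/negP => nd.
have nd' : p %% mp != 0 by apply: contra nd => /eqP E; apply/modp_eq0P.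
have := ltn_modp p mp; rewrite mp_neq0 ltnNge => /negP; apply; apply: (mp_min nd').
move: pr; rewrite {1}(divp_eq p mp) rmorphD rmorphM /= hornerD hornerM.
by rewrite mp_root mulr0 add0r.
Qed.

Lemma mp_size : (size mp <= m.+1)%N.
Proof.
pose phi := fun v : 'rV['F_2]_(m.+1) => (map_poly F2r (rVpoly v)).[beta].
have : ~~ injectiveb phi.
  apply/negP => /injectiveP inj; have := leq_card phi inj.
  rewrite card_mx card_Fp // mul1n hF leq_exp2l // ltnn //.
case/injectivePn => v [w vw E].
have qn0 : rVpoly (v - w) != 0.
  apply: contra vw => /eqP E0; rewrite -subr_eq0; apply/eqP.
  by rewrite -[v - w]rVpolyK E0 linear0.
apply: leq_trans (mp_min qn0 _) (size_poly _ _).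
by rewrite linearB rmorphB /= hornerD hornerN -/(phi v) -/(phi w) E subrr.
Qed.

Lemma mp_coef0 : mp`_0 = 1.
Proof.
have : mp`_0 = 0 \/ mp`_0 = 1.
  by case: (mp`_0) => [[|[|a]] Ha]; [left; exact: val_inj | right; exact: val_inj | ].
case=> // m00; exfalso.
have : root mp 0 by rewrite /root horner_coef0 m00.
case/factor_theorem => q Eq.
have qn0 : q != 0 by apply: contraNneq mp_neq0 => q0; rewrite Eq q0 mul0r.
suff qr : (map_poly F2r q).[beta] = 0.
  by have := mp_min qn0 qr; rewrite Eq size_mul ?polyXsubC_eq0 // size_XsubC addn2 /= ltnn.
move: mp_root; rewrite Eq mapM_horner => /eqP; rewrite mulf_eq0 => /orP[/eqP //|].
by rewrite mapXsubC_horner rmorph0 subr0 invr_eq0 (negPf alpha_neq0).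
Qed.

Definition gpol := ('X - 1) * mp.

Lemma gpol_roots r : (map_poly F2r gpol).[(gam r)^-1] = 0.
Proof.
rewrite /gpol -polyC1 mapM_horner mapXsubC_horner rmorph1.
rewrite /gam; case: (val r) => [|k]; first by rewrite invr1 subrr mul0r.
by rewrite -exprVn -map_frob mp_root expr0n expn_eq0 /= mulr0.
Qed.

Lemma gpol_ann : annihilates sq gpol.
Proof.
move=> i hi; apply: F2_inj; rewrite ann_val // big1 // => r _.
by rewrite gpol_roots mulr0.
Qed.

Lemma gpol_coef0 : gpol`_0 = 1.
Proof. rewrite /gpol coef0M mp_coef0 mulr1 coefB coefX coef1 /= sub0r (oppr_pchar2 (pchar_Fp _)) //. Qed.

Lemma gpol_neq0 : gpol != 0.
Proof. by rewrite /gpol mulf_neq0 ?mp_neq0 // -polyC1 polyXsubC_eq0. Qed.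

Lemma gpol_size : size gpol = m.+2.
Proof.
have H1 := ann_size gpol_ann gpol_coef0.
apply/eqP; rewrite eqn_leq H1 andbT.
rewrite /gpol -polyC1 size_mul ?polyXsubC_eq0 ?mp_neq0 // size_XsubC.
by have := mp_size; rewrite add2n.
Qed.

Lemma gpol_minpoly : is_seq_minpoly sq gpol.
Proof.
split; [exact: gpol_coef0 | exact: gpol_ann |].
by move=> q q0 qa; rewrite gpol_size; apply: ann_size.
Qed.

Lemma mapD_horner (p q : {poly 'F_2}) x :
  (map_poly F2r (p + q)).[x] = (map_poly F2r p).[x] + (map_poly F2r q).[x].
Proof. by rewrite rmorphD hornerD. Qed.
Lemma mapXn_horner i x : (map_poly F2r 'X^i).[x] = x ^+ i.
Proof. by rewrite map_polyXn hornerXn. Qed.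
Lemma map1_horner x : (map_poly F2r 1).[x] = 1.
Proof. by rewrite rmorph1 hornerC. Qed.

Lemma n_gt6 : (7 <= n)%N.
Proof. have : (2 ^ 3 <= 2 ^ m)%N by rewrite leq_exp2l. lia. Qed.

Lemma beta_prim : n.-primitive_root beta.
Proof.
have -> : beta = alpha ^+ n.-1.
  apply: (mulIf alpha_neq0); rewrite mulVf ?alpha_neq0 // -exprSr prednK ?n_gt0 //.
  by rewrite prim_expr_order.
rewrite prim_root_exp_coprime //; have := n_gt0; case: n => // n' _ /=.
exact: coprimenS.
Qed.

Lemma beta_neq0 : beta != 0. Proof. by rewrite invr_eq0 alpha_neq0. Qed.

Lemma beta_inj i j : (i < n)%N -> (j < n)%N -> beta ^+ i = beta ^+ j -> i = j.
Proof.
move=> hi hj /eqP; rewrite (eq_prim_root_expr beta_prim) !modn_small //; exact/eqP.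
Qed.

Lemma beta_neq1 : beta != 1.
Proof.
apply/negP => /eqP b1.
have h1 : (1 < n)%N by apply: leq_trans n_gt6.
have := @beta_inj 0 1 n_gt0 h1; rewrite expr0 expr1 b1.
by move=> /(_ erefl).
Qed.

Definition Xn1 : {poly 'F_2} := 'X^n - 1.

Lemma size_Xn1 : size Xn1 = n.+1.
Proof. by rewrite /Xn1 -polyC1 size_XnsubC ?n_gt0. Qed.

Lemma Xn1_fact : exists K, Xn1 = gpol * K.
Proof.
pose S : {poly 'F_2} := \sum_(i < n) 'X^i.
have ES : Xn1 = ('X - 1) * S by rewrite /Xn1 /S subrX1.
have : mp %| S.
  apply: mp_dvd.
  have : (beta - 1) * (map_poly F2r S).[beta] = 0.
    have E : beta - 1 = (map_poly F2r ('X - 1%:P)).[beta].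
      by rewrite mapXsubC_horner (rmorph1 F2r).
    rewrite E -mapM_horner polyC1 -ES /Xn1.
    by rewrite -polyC1 mapD_horner rmorphN polyC1 mapXn_horner hornerN map1_horner
      prim_expr_order ?beta_prim // subrr.
  by move/eqP; rewrite mulf_eq0 subr_eq0 (negPf beta_neq1) => /eqP.
case/dvdpP => K EK; exists K; rewrite ES EK /gpol; ring.
Qed.

Definition kk := (2 ^ m - 2 - m)%N.

Lemma n_eq : n = (kk + m.+1)%N.
Proof.
rewrite /kk; have := ltn_expl (m.-1) (ltnSn 1).
have : (2 ^ m = 2 * 2 ^ m.-1)%N by rewrite -expnS prednK.
lia.
Qed.

Definition phi (b : 'rV['F_2]_kk) : 'rV['F_2]_n := poly_rV (rVpoly b * gpol).

Lemma size_small (r : {poly 'F_2}) : (size r <= kk)%N -> (size (r * gpol)%R <= n)%N.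
Proof.
move=> hr; apply: leq_trans (size_mul_leq _ _) _.
by rewrite gpol_size n_eq; move: hr; case: (size r) => [|s] /=; lia.
Qed.

Lemma phi_inj : injective phi.
Proof.
move=> b b' /(congr1 rVpoly); rewrite !poly_rV_K ?size_small ?size_poly //.
by move/(mulIf gpol_neq0)/(can_inj rVpolyK).
Qed.

Lemma code_eq : cyclic_code n gpol = [set phi b | b : 'rV['F_2]_kk].
Proof.
have [K EK] := Xn1_fact.
have K0 : K != 0 by apply: contra_eq_neq EK => ->; rewrite mulr0 -size_poly_eq0 size_Xn1.
have sK : size K = kk.+1.
  have := size_Xn1; rewrite EK size_mul ?gpol_neq0 // gpol_size n_eq addSn /=.
  by move=> E; apply/eqP; rewrite -(eqn_add2l m.+1) E addnC addnS.
apply/setP => c; apply/imsetP/imsetP => [[q _ ->]|[b _ ->]].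
  set A := rVpoly q.
  have sr : (size (A %% K)%R <= kk)%N by have := ltn_modp A K; rewrite K0 sK.
  exists (poly_rV (A %% K)) => //; rewrite /phi poly_rV_K //.
  congr poly_rV; rewrite {1}(divp_eq A K) mulrDl -mulrA [K * _]mulrC -EK.
  rewrite -/Xn1 modp_addl_mul_small // size_Xn1 ltnS; exact: size_small.
exists (poly_rV (rVpoly b)) => //; rewrite /phi poly_rV_K; last first.
  by apply: leq_trans (size_poly _ _) _; rewrite n_eq leq_addr.
by rewrite modp_small // (_ : 'X^n - 1 = Xn1) // size_Xn1 ltnS size_small ?size_poly.
Qed.

Lemma code_card : #|cyclic_code n gpol| = (2 ^ kk)%N.
Proof.
by rewrite code_eq card_imset; [rewrite card_mx card_Fp // mul1n | exact: phi_inj].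
Qed.

Lemma F2_01 (a : 'F_2) : a != 0 -> a = 1.
Proof. by case: a => [[|[|a]] Ha] // _; apply: val_inj. Qed.

Definition supp (c : 'rV['F_2]_n) := [set i : 'I_n | c 0 i != 0].

Lemma horner_supp (c : 'rV['F_2]_n) x :
  (map_poly F2r (rVpoly c)).[x] = \sum_(i in supp c) x ^+ i.
Proof.
rewrite (horner_mapF2 _ (size_poly _ _)) [RHS]big_mkcond /=.
apply: eq_bigr => i _; rewrite coef_rVpoly_ord inE.
case: eqP => [->|/eqP c1]; first by rewrite /F2_to /= mulr0n mul0r.
by rewrite (F2_01 c1) /F2_to /= mulr1n mul1r.
Qed.

Lemma code_poly c : c \in cyclic_code n gpol ->
  forall r, (map_poly F2r (rVpoly c)).[(gam r)^-1] = 0.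
Proof.
rewrite code_eq => /imsetP [b _ ->] r.
by rewrite /phi poly_rV_K ?size_small ?size_poly // mapM_horner gpol_roots mulr0.
Qed.

Lemma weight_ge c : c \in cyclic_code n gpol -> c != 0 -> (4 <= hweight c)%N.
Proof.
move=> cC c0; rewrite /hweight -/(supp c).
have w0 : #|supp c| != 0%N.
  apply: contra c0 => /eqP /cards0_eq S0; apply/eqP/rowP => i; rewrite mxE.
  have : i \notin supp c by rewrite S0 in_set0.
  by rewrite inE negbK => /eqP.
have ev : (2 %| #|supp c|)%N.
  rewrite (dvdn_pcharf chF); apply/eqP.
  have := code_poly cC ord0; rewrite horner_supp /gam /= invr1.
  by rewrite (eq_bigr (fun _ => 1)) ?sumr_const // => i _; rewrite expr1n.
have w2 : #|supp c| != 2%N.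
  apply/negP => /cards2P [x [y [xy Sxy]]].
  have v1 : \val (inord 1 : 'I_m.+1) = 1%N by apply: inordK; lia.
  have := code_poly cC (inord 1); rewrite horner_supp Sxy /gam v1 /= expr1.
  rewrite big_setU1 ?inE //= big_set1 => /eqP; rewrite addr_eq0 (oppr_pchar2 chF).
  by move/eqP/(beta_inj (ltn_ord x) (ltn_ord y))/val_inj/eqP; rewrite (negPf xy).
move: w0 ev w2; case: #|supp c| => [|[|[|[|w]]]] //.
Qed.

Lemma exists_w4 : exists2 c, c \in cyclic_code n gpol & (c != 0) && (hweight c == 4%N).
Proof.
pose x := 1 + beta + beta ^+ 2.
have x0 : x != 0.
  apply/negP => /eqP x0.
  have : beta ^+ 3 = 1 + (beta - 1) * x by rewrite /x; ring.
  rewrite x0 mulr0 addr0 => /eqP; rewrite -(prim_order_dvd beta_prim) => /dvdn_leq.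
  by have := n_gt6; move=> h7 /(_ isT); lia.
have xn : x ^+ n = 1.
  apply: (mulIf x0); rewrite mul1r -exprSr subn1 prednK ?expn_gt0 //.
  by rewrite -hF expf_card.
have [k0 Ek0] := prim_rootP beta_prim xn.
have b2 : beta ^+ 2 != 1.
  by rewrite -(prim_order_dvd beta_prim); apply/negP => /dvdn_leq; have := n_gt6; lia.
have b1 : 1 + beta != 0.
  by rewrite addr_eq0 (oppr_pchar2 chF) eq_sym beta_neq1.
have ne0 : (k0 != 0%N :> nat).
  apply/negP => /eqP k00; move: Ek0; rewrite k00 expr0 => E.
  have : beta * (1 + beta) = 0 by rewrite -[RHS](subrr x) {2}E /x; ring.
  by move/eqP; rewrite mulf_eq0 (negPf beta_neq0) (negPf b1).
have ne1 : (k0 != 1%N :> nat).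
  apply/negP => /eqP k00; move: Ek0; rewrite k00 expr1 => E.
  have : (1 + beta) ^+ 2 = 0 by rewrite sqrD expr1n -[RHS](subrr x) {2}E /x; ring.
  by move/eqP; rewrite expf_eq0 (negPf b1) andbF.
have ne2 : (k0 != 2%N :> nat).
  apply/negP => /eqP k00; move: Ek0; rewrite k00 => E.
  have : 1 + beta = 0 by rewrite -[RHS](subrr x) {2}E /x; ring.
  by move/eqP; rewrite (negPf b1).
pose p0 : {poly 'F_2} := 1 + 'X^1 + 'X^2 + 'X^k0.
have mp0 : (map_poly F2r p0).[beta] = 0.
  rewrite !mapD_horner map1_horner !mapXn_horner -Ek0 expr1.
  exact: addxx.
have p1 : root p0 1.
  rewrite /root /p0 !hornerE !expr1n.
  by rewrite (addrr_pchar2 (pchar_Fp _)) // add0r (addrr_pchar2 (pchar_Fp _)).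
case/factor_theorem: p1 => q1 Eq.
have q1r : (map_poly F2r q1).[beta] = 0.
  move: mp0; rewrite Eq mapM_horner mapXsubC_horner (rmorph1 F2r) => /eqP.
  by rewrite mulf_eq0 subr_eq0 (negPf beta_neq1) orbF => /eqP.
case/dvdpP: (mp_dvd q1r) => r Er.
have Ep : p0 = r * gpol by rewrite Eq Er /gpol polyC1; ring.
have szp : (size p0 <= n)%N.
  have sX i : (i < n)%N -> (size ('X^i : {poly 'F_2}) <= n)%N by rewrite size_polyXn.
  have s2 : (2 < n)%N by apply: leq_trans n_gt6.
  have s1 : (1 < n)%N by apply: leq_trans n_gt6.
  rewrite /p0; apply: leq_trans (size_polyD _ _) _; rewrite geq_max (sX _ (ltn_ord k0)) andbT.
  apply: leq_trans (size_polyD _ _) _; rewrite geq_max (sX _ s2) andbT.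
  apply: leq_trans (size_polyD _ _) _; rewrite geq_max (sX _ s1) andbT.
  by rewrite size_poly1 n_gt0.
have szr : (size r <= kk)%N.
  have [->|r0] := eqVneq r 0; first by rewrite size_poly0.
  move: szp; rewrite Ep size_mul ?gpol_neq0 // gpol_size n_eq addnS /=.
  by rewrite leq_add2r.
pose c : 'rV['F_2]_n := poly_rV p0.
have cC : c \in cyclic_code n gpol.
  by rewrite code_eq; apply/imsetP; exists (poly_rV r) => //; rewrite /phi poly_rV_K // -Ep.
have c0 : c != 0.
  apply/negP => /eqP /rowP /(_ (Ordinal n_gt0)); rewrite !mxE /p0 !coefD coef1 !coefXn /=.
  rewrite eq_sym (negPf ne0) /= !addr0 => /eqP; by rewrite oner_eq0.
exists c => //; rewrite c0 /= eqn_leq weight_ge // andbT.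
have s2 : (2 < n)%N by apply: leq_trans n_gt6.
have s1 : (1 < n)%N by apply: leq_trans n_gt6.
pose s := [:: Ordinal n_gt0; Ordinal s1; Ordinal s2; k0].
apply: leq_trans (subset_leq_card (_ : supp c \subset [set i in s])) _.
  apply/subsetP => i; rewrite !inE mxE /p0 !coefD coef1 !coefXn.
  apply: contraR; rewrite !negb_or => /and4P[a b cc d].
  rewrite (negPf a : (nat_of_ord i == 0%N) = false) (negPf b : (nat_of_ord i == 1%N) = false).
  rewrite (negPf cc : (nat_of_ord i == 2%N) = false) (negPf d : (nat_of_ord i == k0) = false).
  by rewrite !addr0 eqxx.
by rewrite cardsE; apply: leq_trans (card_size s) _.
Qed.

End Tr.

Theorem theorem1 (F : finFieldType) (m h : nat) (alpha : F)
  (hm : m = (2 * h + 1)%N) (h3 : (3 <= m)%N)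
  (hF : #|F| = (2 ^ m)%N)
  (halpha : (2 ^ m - 1)%N.-primitive_root alpha) :
  let f1 := fun x : F =>
    x + x ^+ (2 ^ h.+1 - 1) + x ^+ (2 ^ m - 2 ^ h.+1 + 1) in
  let s := trace_seq m f1 alpha in
  forall mp : {poly 'F_2}, is_minpoly_F2 alpha^-1 mp ->
  let g := ('X - 1) * mp in
  is_seq_minpoly s g /\
  has_params (cyclic_code (2 ^ m - 1) g) (2 ^ m - 2 - m) 4.
Proof.
move=> f1 s mp hmp g.
have m0 : (0 < m)%N by lia.
split; first exact: (gpol_minpoly hF m0 hm h3 halpha hmp).
split.
- exact: (code_card hF m0 hm h3 halpha hmp).
- exact: (exists_w4 hF m0 hm h3 halpha hmp).
- move=> c cC c0; exact: (weight_ge hF m0 hm h3 halpha hmp cC c0).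
Qed.
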